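(* Consider the following model. Particles occupy distinct nodes of the infinite regular triangular grid $G_\Delta$; the set of occupied nodes is connected and may contain holes (i.e., it need not be simply connected). Particles are anonymous, start in identical states, run the same deterministic algorithm, have constant memory and cannot move. Each particle has six ports, labelled $0,\dots,5$, one for each grid edge incident to its node, such that port $0$ leads to the East neighbour and port $3$ to the West neighbour for every particle (common direction), and ports $i$ and $i+1 \bmod 6$ lead to adjacent grid nodes; the circular orientation of the remaining labels (clockwise or counterclockwise) may differ from particle to particle (no common chirality). Particles communicate only by exchanging messages with particles at adjacent nodes, and both sender and receiver know the local port through which a message is sent/received. Then there is no terminating algorithm (one in which, after finitely many steps, every particle has irrevocably entered a final state, exactly one particle being in the final state leader) that solves Leader Election in every such configuration under a fair synchronous scheduler.
   Context: A fair synchronous scheduler activates all particles simultaneously in every step. In the triangular grid, the six neighbours of a node are in the directions East, West, North East, North West, South East and South West. Leader Election means that eventually exactly one particle is in the state leader. *)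

(* Defs.v *)
From mathcomp Require Import all_boot all_order all_algebra.
Set Implicit Arguments. Unset Strict Implicit. Unset Printing Implicit Defensive.
Import Order.TTheory GRing.Theory Num.Theory.
Local Open Scope ring_scope.

(* Nodes of the triangular grid in axial coordinates: (x, y) sits at the
   Cartesian point (x + y/2, y*sqrt(3)/2). *)
Definition node := (int * int)%type.

(* The six directions in counterclockwise order:
   0 = E, 1 = NE, 2 = NW, 3 = W, 4 = SW, 5 = SE. *)
Definition dir (k : 'I_6) : node :=
  match nat_of_ord k with
  | 0%N => (1, 0)
  | 1%N => (0, 1)
  | 2%N => (-1, 1)
  | 3%N => (-1, 0)
  | 4%N => (0, -1)
  | _ => (1, -1)
  end.

Definition add_node (u d : node) : node := (u.1 + d.1, u.2 + d.2).

Definition adjacent (u v : node) : bool :=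
  [exists k : 'I_6, v == add_node u (dir k)].

(* If c = true
   the ports go counterclockwise (port i = direction i), otherwise clockwise
   (port i = direction -i mod 6).  These are exactly the two labellings
   allowed by the model. *)
Definition port_to_dir (c : bool) (i : 'I_6) : 'I_6 :=
  if c then i else inord ((6 - nat_of_ord i) %% 6)%N.

Definition port_dir (c : bool) (i : 'I_6) : node := dir (port_to_dir c i).

Definition opp_dir (k : 'I_6) : 'I_6 := inord ((nat_of_ord k + 3) %% 6)%N.

Definition connected_nodes (S : seq node) : Prop :=
  forall u v, u \in S -> v \in S ->
    exists p : seq node, [/\ path adjacent u p, last u p = v & all (mem S) p].

Definition valid_config (S : seq node) : Prop :=
  [/\ uniq S, S != [::] & connected_nodes S].

(* A deterministic constant-memory algorithm: finite state set Q, finite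
   message alphabet M, initial state q0, and transition function taking the
   current state and the messages received on each port (None = nothing
   received) to the new state and the messages to send on each port. *)
Definition transition (Q M : Type) :=
  Q -> ('I_6 -> option M) -> Q * ('I_6 -> option M).

(* Global state of a synchronous execution: state of each node and the
   messages it sent in the last round on each of its ports. *)
Definition gstate (Q M : Type) := ((node -> Q) * (node -> 'I_6 -> option M))%type.

Section Exec.
Variables (Q M : Type) (q0 : Q) (delta : transition Q M)
          (S : seq node) (chi : node -> bool).

Definition inbox (out : node -> 'I_6 -> option M) (w : node) (j : 'I_6)
  : option M :=
  let k := port_to_dir (chi w) j in
  let u := add_node w (dir k) in
  if u \in S then
    let i := port_to_dir (chi u) (opp_dir k) in  (* port_to_dir is an involution *)
    out u i
  else None.

Definition init_gstate : gstate Q M := (fun _ => q0, fun _ _ => None).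

(* one fair synchronous round: every particle is activated *)
Definition step (g : gstate Q M) : gstate Q M :=
  (fun w => (delta (g.1 w) (inbox g.2 w)).1,
   fun w => (delta (g.1 w) (inbox g.2 w)).2).

Definition exec (t : nat) : gstate Q M := iter t step init_gstate.

Definition st (t : nat) (v : node) : Q := (exec t).1 v.
End Exec.

Definition terminating_LE (Q : eqType) (M : Type) (q0 : Q) (delta : transition Q M)
  (final : pred Q) (leader : Q) (S : seq node) (chi : node -> bool) : Prop :=
  (forall t v, v \in S -> final (st q0 delta S chi t v) ->
     forall t', (t <= t')%N -> st q0 delta S chi t' v = st q0 delta S chi t v)
  /\ exists T : nat,
       (forall v, v \in S -> final (st q0 delta S chi T v))
       /\ count (fun v => st q0 delta S chi T v == leader :> Q) S = 1%N.

Definition solves_LE (Q M : finType) (q0 : Q) (delta : transition Q M)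
  (final : pred Q) (leader : Q) : Prop :=
  forall (S : seq node) (chi : node -> bool),
    valid_config S -> terminating_LE q0 delta final leader S chi.

(* Main.v *)
Require Import Defs.
From mathcomp Require Import all_boot all_order all_algebra.
From mathcomp Require Import zify ring.
From Stdlib Require Import FunctionalExtensionality.
Set Implicit Arguments. Unset Strict Implicit. Unset Printing Implicit Defensive.
Import Order.TTheory GRing.Theory Num.Theory.

Section Sim.
Variables (Q M : Type) (q0 : Q) (delta : transition Q M).
Variables (SA SB : seq node) (chiA chiB : node -> bool) (a b : nat -> node) (N : nat).
Hypothesis LOC : forall i, (0 < i)%N -> (i < N)%N -> forall j : 'I_6,
  let kB := port_to_dir (chiB (b i)) j in
  let kA := port_to_dir (chiA (a i)) j in
  ((add_node (b i) (dir kB) \notin SB) /\ (add_node (a i) (dir kA) \notin SA)) \/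
  exists m, [/\ (m = i.+1 \/ m.+1 = i), add_node (b i) (dir kB) = b m,
     add_node (a i) (dir kA) = a m, b m \in SB /\ a m \in SA &
     port_to_dir (chiB (b m)) (opp_dir kB) = port_to_dir (chiA (a m)) (opp_dir kA)].

Lemma sim t : forall i, (t <= i)%N -> (i + t <= N)%N ->
  (exec q0 delta SB chiB t).1 (b i) = (exec q0 delta SA chiA t).1 (a i) /\
  (exec q0 delta SB chiB t).2 (b i) = (exec q0 delta SA chiA t).2 (a i).
Proof.
elim: t => [|t IH] i Hti HiN; first by [].
have Hinb : inbox SB chiB (exec q0 delta SB chiB t).2 (b i) =
            inbox SA chiA (exec q0 delta SA chiA t).2 (a i).
  apply: functional_extensionality => j.
  have H0 : (0 < i)%N by lia.
  have H1 : (i < N)%N by lia.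
  have [[Hb Ha]|[m [Hm Eb Ea [Hbm Ham] Ep]]] := LOC H0 H1 j.
    by rewrite /inbox /= (negbTE Hb) (negbTE Ha).
  rewrite /inbox /= Eb Ea Hbm Ham Ep.
  have h1 : (t <= m)%N by case: Hm => Hm; lia.
  have h2 : (m + t <= N)%N by case: Hm => Hm; lia.
  by have [_ ->] := IH m h1 h2.
have [E1 _] := IH i ltac:(lia) ltac:(lia).
by rewrite /exec /= -!/(exec _ _ _ _ _) /step /= E1 Hinb.
Qed.
End Sim.

Definition Aseq : seq node := [:: (1,0); (0,1); (-1,1); (-1,0); (0,-1); (1,-1)]%R.
Definition aA (n : nat) : node := nth (0,0)%R Aseq (n %% 6).
Definition base (r : nat) : node :=
  nth (0,0)%R [:: (0,0); (0,-1); (-1,-1); (-1,-2); (0,-3); (1,-3)]%R r.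
Definition Vq (q : nat) : node := ((q%:Z) * 2, - ((q%:Z) * 4))%R.
Definition bB (n : nat) : node := add_node (base (n %% 6)) (Vq (n %/ 6)).
Definition chiB (v : node) : bool := (2 * v.1 + v.2 <= -3)%R.

Definition I6 := iota 0 6.
Definition dirn (k : nat) : node :=
  match k with
  | 0%N => (1, 0)
  | 1%N => (0, 1)
  | 2%N => (-1, 1)
  | 3%N => (-1, 0)
  | 4%N => (0, -1)
  | _ => (1, -1)
  end%R.
Lemma dir_dirn (k : 'I_6) : dir k = dirn k. Proof. by []. Qed.
Lemma F0 : all (fun rm => all (fun rn => all (fun k =>
  (base rm == add_node (base rn) (dirn k)) ==> ((rm == rn.+1) || (rm.+1 == rn)))%N I6) I6) I6.
Proof. by vm_compute. Qed.

Lemma allI6 (P : pred nat) : all P I6 -> forall r, (r < 6)%N -> P r.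
Proof. by move/allP=> H r Hr; apply: H; rewrite mem_iota. Qed.

Lemma node_eq (u v : node) : u.1 = v.1 -> u.2 = v.2 -> u = v.
Proof. by case: u v => [? ?] [? ?] /= -> ->. Qed.

Definition sdn (r : nat) : nat := nth 0%N [:: 4; 3; 4; 5; 0; 5]%N r.

Lemma bB_eq q r : (r < 6)%N -> bB (q * 6 + r) = add_node (base r) (Vq q).
Proof. by move=> Hr; rewrite /bB divnMDl // modnMDl modn_small // divn_small // addn0. Qed.

Lemma bB_step_aux q r : (r < 6)%N ->
  bB (q * 6 + r).+1 = add_node (bB (q * 6 + r)) (dirn (sdn r)).
Proof.
case: r => [|[|[|[|[|[|r]]]]]] // _.
all: try (rewrite -addnS !bB_eq //; apply: node_eq; rewrite /= /Vq /=; lia).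
have -> : (q * 6 + 5).+1 = q.+1 * 6 + 0 by lia.
rewrite !bB_eq //; apply: node_eq; rewrite /= /Vq /=; lia.
Qed.

Lemma bB_step n : bB n.+1 = add_node (bB n) (dirn (sdn (n %% 6))).
Proof.
rewrite {1 2}(divn_eq n 6); apply: bB_step_aux; by rewrite ltn_pmod.
Qed.

Definition V1 : node := (2, -4)%R.
Lemma Fp : all (fun rm => all (fun rn => all (fun k =>
  (base rm == add_node (add_node (base rn) (dirn k)) V1) ==> ((rm == 5) && (rn == 0)))%N I6) I6) I6.
Proof. by vm_compute. Qed.
Lemma Fm : all (fun rm => all (fun rn => all (fun k =>
  (add_node (base rm) V1 == add_node (base rn) (dirn k)) ==> ((rm == 0) && (rn == 5)))%N I6) I6) I6.
Proof. by vm_compute. Qed.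
Lemma Finj : all (fun rm => all (fun rn => (base rm == base rn) ==> (rm == rn))%N I6) I6.
Proof. by vm_compute. Qed.

Lemma base_bnd r : (r < 6)%N -> (-3 <= (base r).2 <= 0)%R.
Proof. by case: r => [|[|[|[|[|[|r]]]]]]. Qed.
Lemma dirn_bnd k : (-1 <= (dirn k).2 <= 1)%R.
Proof. by case: k => [|[|[|[|[|k]]]]]. Qed.

Lemma divmod6 n : n = (n %/ 6 * 6 + n %% 6)%N /\ (n %% 6 < 6)%N.
Proof. by rewrite -divn_eq ltn_pmod. Qed.

Lemma getF (P : nat -> nat -> nat -> bool) :
  all (fun rm => all (fun rn => all (fun k => P rm rn k) I6) I6) I6 ->
  forall rm rn k, (rm < 6)%N -> (rn < 6)%N -> (k < 6)%N -> P rm rn k.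
Proof.
move=> H rm rn k a b c.
by move: (allI6 H a) => /allI6 /(_ _ b) /allI6 /(_ _ c).
Qed.

Lemma bB_nb m n k : (k < 6)%N -> bB m = add_node (bB n) (dirn k) -> m = n.+1 \/ m.+1 = n.
Proof.
move=> Hk.
have [Em Hm] := divmod6 m; have [En Hn] := divmod6 n.
move: (m %/ 6)%N (m %% 6)%N (n %/ 6)%N (n %% 6)%N Em Hm En Hn => qm rm qn rn -> Hm -> Hn.
rewrite !bB_eq // => E.
have E1 := congr1 fst E; have E2 := congr1 snd E.
move: E1 E2; rewrite /= /Vq /=.
have := base_bnd Hm; have := base_bnd Hn; have := dirn_bnd k.
have F0' := getF F0 Hm Hn Hk; have Fp' := getF Fp Hm Hn Hk; have Fm' := getF Fm Hm Hn Hk.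
move: F0' Fp' Fm'.
case: (base rm) => xm ym; case: (base rn) => xn yn; case: (dirn k) => dx dy /=.
move=> F0' Fp' Fm' /andP[d1 d2] /andP[n1 n2] /andP[m1 m2] E1 E2.
have : (qn = qm \/ qn = qm.+1 \/ qm = qn.+1)%N by lia.
case=> [Eq|[Eq|Eq]].
- have : ((xm, ym) == (xn + dx, yn + dy))%R by apply/eqP; apply: node_eq => /=; lia.
  move/(implyP F0') => /orP[] /eqP; lia.
- have : ((xm, ym) == (xn + dx + 2, yn + dy + -4))%R by apply/eqP; apply: node_eq => /=; lia.
  move/(implyP Fp') => /andP[] /eqP ? /eqP ?; lia.
- have : ((xm + 2, ym + -4) == (xn + dx, yn + dy))%R by apply/eqP; apply: node_eq => /=; lia.
  move/(implyP Fm') => /andP[] /eqP ? /eqP ?; lia.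
Qed.

Lemma bB_inj m n : bB m = bB n -> m = n.
Proof.
have [Em Hm] := divmod6 m; have [En Hn] := divmod6 n.
move: (m %/ 6)%N (m %% 6)%N (n %/ 6)%N (n %% 6)%N Em Hm En Hn => qm rm qn rn -> Hm -> Hn.
rewrite !bB_eq // => E.
have E1 := congr1 fst E; have E2 := congr1 snd E.
move: E1 E2; rewrite /= /Vq /=.
have := base_bnd Hm; have := base_bnd Hn.
have := allI6 Finj Hm; move/allI6/(_ _ Hn).
case: (base rm) => xm ym; case: (base rn) => xn yn /=.
move=> Fi /andP[n1 n2] /andP[m1 m2] E1 E2.
have Eq : qm = qn by lia.
have : ((xm, ym) == (xn, yn))%R by apply/eqP; apply: node_eq => /=; lia.
move/(implyP Fi)/eqP; lia.
Qed.

Definition ptdn (c : bool) (j : nat) : nat := if c then j else ((6 - j) %% 6)%N.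
Lemma val_ptd c (j : 'I_6) : val (port_to_dir c j) = ptdn c j.
Proof. case: c => //=; rewrite /port_to_dir /ptdn /=; by apply: inordK; rewrite ltn_pmod. Qed.
Lemma val_opp (k : 'I_6) : val (opp_dir k) = ((k + 3) %% 6)%N.
Proof. by rewrite /opp_dir; apply: inordK; rewrite ltn_pmod. Qed.

Lemma getF2 (P : nat -> nat -> bool) :
  all (fun r => all (fun k => P r k) I6) I6 ->
  forall r k, (r < 6)%N -> (k < 6)%N -> P r k.
Proof. by move=> H r k a b; move: (allI6 H a) => /allI6 /(_ _ b). Qed.

Lemma Fopp : all (fun k => all (fun _ =>
   dirn ((k + 3) %% 6) == ((- (dirn k).1)%R, (- (dirn k).2)%R)) I6) I6.
Proof. by vm_compute. Qed.
Lemma Fdinj : all (fun k => all (fun k' => (dirn k == dirn k') ==> (k == k')) I6) I6.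
Proof. by vm_compute. Qed.

Definition FFp (r j : nat) : bool :=
 let kb := ptdn (chiB (base r)) j in
 [|| [&& kb == sdn r, add_node (aA r) (dirn j) == aA r.+1 &
        ptdn (chiB (base (r.+1 %% 6))) ((kb + 3) %% 6) == ((j + 3) %% 6)],
     [&& kb == ((sdn ((r + 5) %% 6) + 3) %% 6), add_node (aA r) (dirn j) == aA (r + 5) &
        ptdn (chiB (base ((r + 5) %% 6))) ((kb + 3) %% 6) == ((j + 3) %% 6)] |
     [&& kb != sdn r, kb != ((sdn ((r + 5) %% 6) + 3) %% 6) &
        add_node (aA r) (dirn j) \notin Aseq]]%N.
Lemma FF : all (fun r => all (fun j => FFp r j) I6) I6.
Proof. by vm_compute. Qed.

Lemma chiB_bB n : chiB (bB n) = chiB (base (n %% 6)).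
Proof.
rewrite /bB; case: (base _) => x y; rewrite /chiB /add_node /Vq /=.
congr (_ <= _)%R; lia.
Qed.

Lemma aA_mod n : aA (n %% 6) = aA n.
Proof. by rewrite /aA modn_mod. Qed.
Lemma aA_S n : aA (n %% 6).+1 = aA n.+1.
Proof. by rewrite /aA -addn1 modnDml addn1. Qed.
Lemma mod_p5 n : ((n.+1 %% 6 + 5) %% 6 = n %% 6)%N.
Proof. by rewrite modnDml (_ : n.+1 + 5 = n + 6)%N ?modnDr //; lia. Qed.
Lemma aA_p5 n : aA (n.+1 %% 6 + 5) = aA n.
Proof. by rewrite /aA mod_p5. Qed.
Lemma modS6 n : ((n %% 6).+1 %% 6 = n.+1 %% 6)%N.
Proof. by rewrite -addn1 modnDml addn1. Qed.
Lemma sdn_lt r : (sdn r < 6)%N.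
Proof. by case: r => [|[|[|[|[|[|r]]]]]] //; case: r. Qed.
Lemma aA_in n : aA n \in Aseq.
Proof. by rewrite /aA mem_nth // ltn_pmod. Qed.
Lemma bB_in N m : (m <= N)%N -> bB m \in map bB (iota 0 N.+1).
Proof. by move=> H; apply: map_f; rewrite mem_iota add0n ltnS H. Qed.

Lemma LOCc N : forall i, (0 < i)%N -> (i < N)%N -> forall j : 'I_6,
  let kB := port_to_dir (chiB (bB i)) j in
  let kA := port_to_dir ((fun _ => true) (aA i)) j in
  ((add_node (bB i) (dir kB) \notin map bB (iota 0 N.+1)) /\ (add_node (aA i) (dir kA) \notin Aseq)) \/
  exists m, [/\ (m = i.+1 \/ m.+1 = i), add_node (bB i) (dir kB) = bB m,
     add_node (aA i) (dir kA) = aA m, bB m \in map bB (iota 0 N.+1) /\ aA m \in Aseq &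
     port_to_dir (chiB (bB m)) (opp_dir kB) = port_to_dir ((fun _ => true) (aA m)) (opp_dir kA)].
Proof.
move=> i Hi HiN j kB kA.
have hA : kA = j by [].
have hB : val kB = ptdn (chiB (base (i %% 6))) j by rewrite /kB val_ptd chiB_bB.
have Hr : (i %% 6 < 6)%N by rewrite ltn_pmod.
have := getF2 FF Hr (ltn_ord j); rewrite /FFp -hB aA_mod.
rewrite hA !dir_dirn.
case/or3P => /and3P [h1 h2 h3].
- right; exists i.+1; split.
  + by left.
  + by rewrite bB_step (eqP h1).
  + by rewrite (eqP h2) aA_S.
  + by split; [apply: bB_in | apply: aA_in].
  + apply: val_inj; rewrite /= !val_ptd !val_opp chiB_bB -modS6 (eqP h3) /=.
    by [].
- have [m Em] : exists m, i = m.+1 by exists i.-1; lia.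
  rewrite Em in h1 h2 h3.
  right; exists m; split.
  + by right.
  + rewrite Em bB_step (eqP h1) mod_p5.
    move: (sdn_lt (m %% 6)) => Hs.
    have := getF2 Fopp Hs (isT : (0 < 6)%N) => /eqP ->.
    case: (bB m) => x y; case: (dirn _) => dx dy.
    by apply: node_eq; rewrite /=; lia.
  + by rewrite Em (eqP h2) aA_p5.
  + by split; [apply: bB_in; lia | apply: aA_in].
  + apply: val_inj; rewrite /= !val_ptd !val_opp chiB_bB -(mod_p5 m) (eqP h3).
    by [].
- left; split; last by [].
  apply/negP => /mapP [m _ Hm].
  have Hk : (val kB < 6)%N by apply: ltn_ord.

  case: (bB_nb Hk (esym Hm)) => Em.
  + move: Hm; rewrite Em bB_step => Hm.
    have : dirn kB = dirn (sdn (i %% 6)).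
      move: Hm; case: (bB i) => x y; case: (dirn kB) => a b; case: (dirn (sdn _)) => c d.
      move=> E; have E1 := congr1 fst E; have E2 := congr1 snd E; simpl in E1, E2.
      apply: node_eq => /=; lia.
    move/eqP; have := getF2 Fdinj Hk (sdn_lt (i %% 6)) => /implyP H /H.
    by rewrite (negbTE h1).
  + move: Hm hB Hr h1 h2 h3; rewrite -Em bB_step => Hm hB Hr h1 h2 h3.
    move: h2; rewrite mod_p5 => h2.
    have Hs := sdn_lt (m %% 6).
    have : dirn kB = dirn ((sdn (m %% 6) + 3) %% 6).
      have := getF2 Fopp Hs (isT : (0 < 6)%N) => /eqP ->.
      move: Hm; case: (bB m) => x y; case: (dirn kB) => a b; case: (dirn (sdn _)) => c d.
      move=> E; have E1 := congr1 fst E; have E2 := congr1 snd E; simpl in E1, E2.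
      apply: node_eq => /=; lia.
    move/eqP; have := getF2 Fdinj Hk (ltn_pmod (sdn (m %% 6) + 3) (isT : (0 < 6)%N)).
    move=> /implyP H /H.
    by rewrite (negbTE h2).
Qed.

Lemma adj_sym u v : adjacent u v -> adjacent v u.
Proof.
move/existsP => [k /eqP ->]; apply/existsP; exists (opp_dir k); apply/eqP.
rewrite !dir_dirn val_opp.
have := getF2 Fopp (ltn_ord k) (isT : (0 < 6)%N) => /eqP ->.
case: u => x y; case: (dirn k) => a b; apply: node_eq => /=; lia.
Qed.

Definition reach (S : seq node) u v :=
  exists p : seq node, [/\ path adjacent u p, last u p = v & all (mem S) p].

Lemma reach_trans S u v w : reach S u v -> reach S v w -> reach S u w.
Proof.
move=> [p [P1 L1 A1]] [q [P2 L2 A2]]; exists (p ++ q); split.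
- by rewrite cat_path P1 L1 P2.
- by rewrite last_cat L1.
- by rewrite all_cat A1 A2.
Qed.

Lemma reach_step S u v : adjacent u v -> v \in S -> reach S u v.
Proof. by move=> H Hv; exists [:: v]; rewrite /= H Hv. Qed.

Lemma conn (g : nat -> node) N :
  (forall n, (n < N)%N -> adjacent (g n) (g n.+1)) ->
  connected_nodes (map g (iota 0 N.+1)).
Proof.
move=> Hadj.
set S := map g (iota 0 N.+1).
have inS n : (n <= N)%N -> g n \in S.
  by move=> H; apply: map_f; rewrite mem_iota add0n ltnS H.
have fwd n : (n <= N)%N -> reach S (g 0) (g n).
  elim: n => [|n IH] H; first by exists [::].
  apply: reach_trans (IH (ltnW H)) (reach_step (Hadj _ H) (inS _ H)).
have bwd n : (n <= N)%N -> reach S (g n) (g 0).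
  elim: n => [|n IH] H; first by exists [::].
  apply: reach_trans _ (IH (ltnW H)).
  by apply: reach_step; [apply: adj_sym; apply: Hadj | apply: inS; apply: ltnW].
move=> u v /mapP [i Hi ->] /mapP [j Hj ->].
rewrite mem_iota add0n ltnS in Hi; rewrite mem_iota add0n ltnS in Hj.
exact: reach_trans (bwd _ Hi) (fwd _ Hj).
Qed.

Lemma count2 (T : eqType) (P : pred T) (s : seq T) x y :
  uniq s -> x \in s -> y \in s -> x != y -> P x -> P y -> (1 < count P s)%N.
Proof.
move=> Us xs ys xy Px Py; rewrite -size_filter.
have U2 : uniq [:: x; y] by rewrite /= inE xy.
apply: (uniq_leq_size U2) => z; rewrite !inE => /orP[] /eqP ->;
  by rewrite mem_filter ?Px ?Py.
Qed.

Lemma Aseq_map : Aseq = map aA (iota 0 6).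
Proof. by vm_compute. Qed.

Lemma FA : all (fun n => add_node (aA n) (dirn ((n + 2) %% 6)) == aA n.+1) I6.
Proof. by vm_compute. Qed.

Lemma validA : valid_config Aseq.
Proof.
split; first by vm_compute.
  by [].
rewrite Aseq_map; apply: conn => n Hn.
apply/existsP; exists (Ordinal (ltn_pmod (n + 2) (isT : (0 < 6)%N))).
rewrite dir_dirn /= eq_sym; apply: (allI6 FA); lia.
Qed.

Lemma validB N : valid_config (map bB (iota 0 N.+1)).
Proof.
split.
- rewrite map_inj_in_uniq ?iota_uniq //.
  by move=> m n _ _; apply: bB_inj.
- by [].
- apply: conn => n _; apply/existsP; exists (Ordinal (sdn_lt (n %% 6))).
  by rewrite dir_dirn /= bB_step.
Qed.

Theorem theorem1 :
  forall (Q M : finType) (q0 : Q) (delta : transition Q M)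
         (final : pred Q) (leader : Q),
    ~ solves_LE q0 delta final leader.
Proof.
move=> Q M q0 delta final leader H.
have [_ [TA [HfA HcA]]] := H Aseq (fun _ => true) validA.
have : has (fun v => st q0 delta Aseq (fun _ => true) TA v == leader) Aseq.
  by rewrite has_count HcA.
case/hasP => l Hl /eqP Hlead.
have Hfl := HfA l Hl.
have /mapP [r Hr El] : l \in map aA (iota 0 6) by rewrite -Aseq_map.
subst l.
rewrite mem_iota add0n in Hr.
set N := (7 * TA + 12)%N.
set SB := map bB (iota 0 N.+1).
have [IRB [TB [HfB HcB]]] := H SB chiB (validB N).
have good i : (TA <= i)%N -> (i + TA <= N)%N -> (i %% 6 = r)%N ->
    st q0 delta SB chiB TB (bB i) = leader.
  move=> h1 h2 h3.
  have [E _] := sim q0 delta (@LOCc N) h1 h2.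
  have Ei : st q0 delta SB chiB TA (bB i) = leader.
    by rewrite /st E -aA_mod h3; exact: Hlead.
  have Hw : bB i \in SB by apply: bB_in; lia.
  have Hf : final (st q0 delta SB chiB TA (bB i)) by rewrite Ei -Hlead.
  case: (leqP TA TB) => hT.
    by rewrite (IRB _ _ Hw Hf _ hT).
  by rewrite -(IRB _ _ Hw (HfB _ Hw) _ (ltnW hT)).
have r6 : (r < 6)%N by lia.
have g1 := good (TA * 6 + r)%N ltac:(lia) ltac:(lia) ltac:(by rewrite modnMDl modn_small).
have g2 := good (TA.+1 * 6 + r)%N ltac:(lia) ltac:(lia) ltac:(by rewrite modnMDl modn_small).
have Ub : uniq SB by case: (validB N).
have := count2 (P := fun v => st q0 delta SB chiB TB v == leader) Ub
  (bB_in (N := N) (m := (TA * 6 + r)%N) ltac:(lia)) (bB_in (N := N) (m := (TA.+1 * 6 + r)%N) ltac:(lia)).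
rewrite HcB /= g1 g2 eqxx ltnn => H2.
have Hne : bB (TA * 6 + r) != bB (TA.+1 * 6 + r) by apply/eqP => /bB_inj; lia.
by have := H2 Hne isT isT.
Qed.
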